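(* Let $\Omega$ be a finite set, $n\ge1$, and $P_i,Q_i$ ($i=1,\dots,n$) strictly positive probability mass functions on $\Omega$. For a pair $(P,Q)$ of strictly positive probability mass functions on a finite set $\Sigma$, define its encoding $\eta_{P,Q}:=\sum_{s\in\Sigma}\sqrt{P(s)Q(s)}\,\delta_{\frac12\log\frac{P(s)}{Q(s)}}$ (a measure on $\mathbb R$, $\delta_u$ the Dirac mass at $u$), and let $\eta_i:=\eta_{P_i,Q_i}$. Define probability mass functions on $[n]\times\Omega$ by $\Lambda_P(i,\omega):=\frac1nP_i(\omega)$ and $\Lambda_Q(i,\omega):=\frac1nQ_i(\omega)$. Then the encoding $\eta_{\Lambda_P,\Lambda_Q}$ equals $\bar\eta:=\frac1n\sum_{i=1}^n\eta_i$, and consequently \[ T(\bar\eta^{*n})=\mathrm{TV}(\Lambda_P^{\otimes n},\Lambda_Q^{\otimes n}), \] where $T(\eta):=\frac12\int_{\mathbb R}|e^x-e^{-x}|\,\eta(dx)$.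
   Context: $\bar\eta^{*n}$ is the $n$-fold convolution of $\bar\eta$ with itself. $[n]=\{1,\dots,n\}$. For probability measures on a finite set, $\mathrm{TV}(\mu,\nu)=\frac12\sum|\mu(\cdot)-\nu(\cdot)|$. *)

(* Defs.v *)
From HB Require Import structures.
From mathcomp Require Import all_boot all_order all_algebra.
From mathcomp Require Import reals.
From mathcomp Require Import sequences exp.
Set Implicit Arguments. Unset Strict Implicit. Unset Printing Implicit Defensive.
Import Order.TTheory GRing.Theory Num.Theory.
Local Open Scope ring_scope.

(* A finitely supported (discrete) measure on R, given as a finite list of
   (weight, atom) pairs, i.e. sum_k w_k * delta_{a_k}. *)
Definition dmeas (R : realType) := seq (R * R).

Definition mass (R : realType) (eta : dmeas R) (x : R) : R :=
  \sum_(p <- eta | p.2 == x) p.1.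

Definition dmeas_eq (R : realType) (eta nu : dmeas R) : Prop :=
  forall x : R, mass eta x = mass nu x.

Definition ddirac (R : realType) (u : R) : dmeas R := [:: (1, u)].

Definition dscale (R : realType) (c : R) (eta : dmeas R) : dmeas R :=
  [seq (c * p.1, p.2) | p <- eta].

Definition dconv (R : realType) (eta nu : dmeas R) : dmeas R :=
  [seq (p.1 * q.1, p.2 + q.2) | p <- eta, q <- nu].

Definition dconv_pow (R : realType) (eta : dmeas R) (n : nat) : dmeas R :=
  iter n (dconv eta) (ddirac 0).

Definition Tfun (R : realType) (eta : dmeas R) : R :=
  2^-1 * \sum_(p <- eta) `|expR p.2 - expR (- p.2)| * p.1.

Definition encoding (R : realType) (S : finType) (P Q : S -> R) : dmeas R :=
  flatten [seq dscale (Num.sqrt (P s * Q s)) (ddirac (2^-1 * ln (P s / Q s)))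
          | s <- enum S].

Definition is_pos_pmf (R : realType) (S : finType) (P : S -> R) : Prop :=
  (forall s, 0 < P s) /\ \sum_(s : S) P s = 1.

Definition TV (R : realType) (S : finType) (mu nu : S -> R) : R :=
  2^-1 * \sum_(s : S) `|mu s - nu s|.

Definition prod_pmf (R : realType) (S : finType) (n : nat) (mu : S -> R)
  : {ffun 'I_n -> S} -> R :=
  fun x => \prod_(j < n) mu (x j).

Definition Lambda (R : realType) (Omega : finType) (n : nat)
  (P : 'I_n -> Omega -> R) : ('I_n * Omega)%type -> R :=
  fun iw => P iw.1 iw.2 / n%:R.

Definition eta_bar (R : realType) (Omega : finType) (n : nat)
  (P Q : 'I_n -> Omega -> R) : dmeas R :=
  dscale (n%:R^-1) (flatten [seq encoding (P i) (Q i) | i <- enum 'I_n]).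
Arguments prod_pmf {R S} n mu.

(* Main.v *)
Require Import Defs.
From HB Require Import structures.
From mathcomp Require Import all_boot all_order all_algebra.
From mathcomp Require Import reals.
From mathcomp Require Import sequences exp.
From mathcomp Require Import ring.
Import Order.TTheory GRing.Theory Num.Theory.
Local Open Scope ring_scope.

Section S.
Variable R : realType.

Lemma sum_dconv (L M : dmeas R) (H : R * R -> R) :
  \sum_(p <- dconv L M) H p = \sum_(p <- L) \sum_(q <- M) H (p.1 * q.1, p.2 + q.2).
Proof. by rewrite /dconv big_allpairs_dep. Qed.

Lemma sum_ffunS (S : finType) k (F : S -> {ffun 'I_k -> S} -> R) :
  \sum_(y : {ffun 'I_k.+1 -> S}) F (y ord0) [ffun j => y (lift ord0 j)]
  = \sum_s \sum_x F s x.
Proof.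
rewrite pair_big /=.
pose g (p : S * {ffun 'I_k -> S}) : {ffun 'I_k.+1 -> S} :=
  [ffun j => if unlift ord0 j is Some j' then p.2 j' else p.1].
rewrite (reindex g) /=; last first.
  exists (fun y : {ffun 'I_k.+1 -> S} => (y ord0, [ffun j => y (lift ord0 j)])).
  - move=> [s x] _ /=; rewrite /g !ffunE unlift_none; congr pair.
    by apply/ffunP => j; rewrite !ffunE liftK.
  - move=> y _; apply/ffunP => j; rewrite /g !ffunE /=.
    by case: unliftP => [j' ->|->]; rewrite ?ffunE.
apply: eq_bigr => -[s x] _; rewrite /g ffunE unlift_none; congr F.
by apply/ffunP => j; rewrite !ffunE liftK.
Qed.

Lemma main_pow (L : dmeas R) (S : finType) (W A : S -> R) :
  (forall G : R * R -> R, \sum_(p <- L) G p = \sum_s G (W s, A s)) ->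
  forall k (H : R * R -> R), \sum_(p <- dconv_pow L k) H p =
    \sum_(x : {ffun 'I_k -> S}) H (\prod_(j < k) W (x j), \sum_(j < k) A (x j)).
Proof.
move=> hL; elim=> [|k IH] H.
  rewrite /dconv_pow /= /ddirac big_seq1.
  have x0 : {ffun 'I_0 -> S} by apply: finfun; case.
  rewrite (big_pred1 x0) ?big_ord0 // => x /=; apply/esym/eqP/ffunP; case=> //.
rewrite /dconv_pow iterS -/(dconv_pow L k) sum_dconv.
under eq_bigr => p _ do rewrite (IH (fun q => H (p.1 * q.1, p.2 + q.2))) /=.
rewrite (hL (fun p : R * R => \sum_(x : {ffun 'I_k -> S}) H (p.1 * \prod_(j < k) W (x j), p.2 + \sum_(j < k) A (x j)))) /=.
rewrite -(@sum_ffunS S k (fun s (x : {ffun 'I_k -> S}) => H (W s * \prod_(j < k) W (x j), A s + \sum_(j < k) A (x j)))).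
apply: eq_bigr => y _; rewrite big_ord_recl [in RHS]big_ord_recl.
by congr (H (_ * _, _ + _)); apply: eq_bigr => j _; rewrite ffunE.
Qed.

Lemma sum_encoding (S : finType) (P Q : S -> R) (G : R * R -> R) :
  \sum_(p <- encoding P Q) G p =
  \sum_s G (Num.sqrt (P s * Q s), 2^-1 * ln (P s / Q s)).
Proof.
rewrite /encoding big_flatten big_map big_enum /=; apply: eq_bigr => s _.
by rewrite /dscale /ddirac /= big_seq1 mulr1.
Qed.

Lemma sum_etabar (Omega : finType) n (P Q : 'I_n -> Omega -> R) (G : R * R -> R) :
  (0 < n)%N -> (forall i w, 0 < P i w) -> (forall i w, 0 < Q i w) ->
  \sum_(p <- eta_bar P Q) G p = \sum_(p <- encoding (Lambda P) (Lambda Q)) G p.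
Proof.
move=> n0 hP hQ.
have nz : (n%:R : R) != 0 by rewrite pnatr_eq0 -lt0n.
rewrite sum_encoding /eta_bar /dscale big_map big_flatten big_map big_enum /=.
under eq_bigr => i _ do rewrite (@sum_encoding Omega (P i) (Q i) (fun p => G (n%:R^-1 * p.1, p.2))).
rewrite pair_big /=; apply: eq_bigr => -[i w] _ /=; rewrite /Lambda /=.
have -> : P i w / n%:R / (Q i w / n%:R) = P i w / Q i w.
  by field; rewrite nz gt_eqF.
congr (G (_, _)).
have -> : P i w / n%:R * (Q i w / n%:R) = (P i w * Q i w) * (n%:R^-1) ^+ 2.
  by rewrite expr2; field.
rewrite [in RHS]sqrtrM ?mulr_ge0 ?ltW // sqrtr_sqr ger0_norm ?invr_ge0 ?ler0n //.
by rewrite mulrC.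
Qed.

Lemma psi (u v : R) : 0 < u -> 0 < v ->
  Num.sqrt (u * v) * expR (2^-1 * ln (u / v)) = u /\
  Num.sqrt (u * v) * expR (- (2^-1 * ln (u / v))) = v.
Proof.
move=> u0 v0.
set r := expR _.
have r0 : 0 < r by apply: expR_gt0.
have r2 : r ^+ 2 = u / v.
  rewrite /r -expRM_natl mulrA mulfV ?pnatr_eq0 // mul1r lnK //.
  by rewrite posrE divr_gt0.
have s2 : Num.sqrt (u * v) ^+ 2 = u * v by rewrite sqr_sqrtr // mulr_ge0 ?ltW.
have s0 : 0 <= Num.sqrt (u * v) by apply: sqrtr_ge0.
rewrite expRN -/r; split; apply/eqP.
  rewrite -(@eqrXn2 _ 2) //; [|exact: mulr_ge0 s0 (ltW r0)|exact: ltW].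
  rewrite exprMn s2 r2; apply/eqP; rewrite expr2; field.
  by rewrite gt_eqF.
rewrite -(@eqrXn2 _ 2) //; [|by rewrite mulr_ge0 // invr_ge0 ltW|exact: ltW].
rewrite exprMn exprVn s2 r2; apply/eqP; rewrite expr2; field.
by rewrite !gt_eqF.
Qed.
End S.

Theorem theorem3 (R : realType) (Omega : finType) (n : nat)
  (P Q : 'I_n -> Omega -> R) :
  (0 < n)%N ->
  (forall i, is_pos_pmf (P i)) ->
  (forall i, is_pos_pmf (Q i)) ->
  dmeas_eq (encoding (Lambda P) (Lambda Q)) (eta_bar P Q) /\
  Tfun (dconv_pow (eta_bar P Q) n) =
    TV (prod_pmf n (Lambda P)) (prod_pmf n (Lambda Q)).
Proof.
move=> n0 hP' hQ'.
have hP : forall i w, 0 < P i w by move=> i w; case: (hP' i).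
have hQ : forall i w, 0 < Q i w by move=> i w; case: (hQ' i).
have nz : (0 : R) < n%:R by rewrite ltr0n.
have hLP : forall s, 0 < Lambda P s by move=> s; rewrite /Lambda divr_gt0.
have hLQ : forall s, 0 < Lambda Q s by move=> s; rewrite /Lambda divr_gt0.
split.
  move=> x; rewrite /mass big_mkcond [RHS]big_mkcond /=; symmetry.
  exact: (@sum_etabar R Omega n P Q (fun p => if p.2 == x then p.1 else 0) n0 hP hQ).
rewrite /Tfun /TV; congr (_ * _).
have hb : forall G : R * R -> R, \sum_(p <- eta_bar P Q) G p =
   \sum_s G (Num.sqrt (Lambda P s * Lambda Q s), 2^-1 * ln (Lambda P s / Lambda Q s)).
  by move=> G; rewrite (@sum_etabar R Omega n P Q _ n0 hP hQ) sum_encoding.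
rewrite (@main_pow R _ _ _ _ hb n (fun p => `|expR p.2 - expR (- p.2)| * p.1)).
apply: eq_bigr => x _ /=; rewrite /prod_pmf.
set W := fun s => Num.sqrt (Lambda P s * Lambda Q s).
have hW : 0 <= \prod_(j < n) W (x j).
  by apply: prodr_ge0 => j _; apply: sqrtr_ge0.
rewrite -[in X in _ * X](ger0_norm hW) -normrM mulrBl -sumrN !expR_sum -!big_split /=.
congr `|_ - _|; apply: eq_bigr => j _; rewrite mulrC.
  rewrite /W; exact: (@psi R _ _ (hLP (x j)) (hLQ (x j))).1.
rewrite /W; exact: (@psi R _ _ (hLP (x j)) (hLQ (x j))).2.
Qed.
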